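(* There exists a set $A\subset\mathbb{N}$ with $d^*(A)>0$ such that there do not exist $B\subset\mathbb{N}$ with $d^*(B)>0$ and an infinite set $C\subset\mathbb{N}$ with $B+C\subset A$.
   Context: Convention: $\mathbb{N}=\{0,1,2,\dots\}$. For $A\subset\mathbb{N}$, $d^*(A)=\lim_{N\to\infty}\sup_{M\in\mathbb{N}}\frac{|A\cap[M,M+N)|}{N}$ (upper Banach density). $B+C=\{b+c\colon b\in B,\ c\in C\}$. *)

(* Defs.v *)
From Stdlib Require Import Reals.
Open Scope R_scope.

(* Subsets of N are represented by boolean predicates nat -> bool
   (classically equivalent to arbitrary subsets). *)

Fixpoint cnt (A : nat -> bool) (M N : nat) : nat :=
  match N with
  | O => O
  | S N' => (if A M then 1 else 0) + cnt A (S M) N'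
  end%nat.

Definition window_density (A : nat -> bool) (N M : nat) : R :=
  INR (cnt A M N) / INR N.

Definition upper_banach_density_is (A : nat -> bool) (d : R) : Prop :=
  exists s : nat -> R,
    (forall N : nat, is_lub (fun x => exists M : nat, x = window_density A N M) (s N))
    /\ Un_cv s d.

Definition pos_ubd (A : nat -> bool) : Prop :=
  exists d : R, upper_banach_density_is A d /\ 0 < d.

Definition infinite_set (C : nat -> bool) : Prop :=
  forall n : nat, exists m : nat, (n <= m)%nat /\ C m = true.

Definition sumset_sub (B C A : nat -> bool) : Prop :=
  forall b c : nat, B b = true -> C c = true -> A (b + c)%nat = true.

(* Main.v *)
Require Import Defs.
From Stdlib Require Import Reals.
From Stdlib Require Import Arith Lia Bool List.
Import ListNotations.
Open Scope nat_scope.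

Fixpoint csum (f : nat -> nat) (n : nat) : nat :=
  match n with 0 => 0 | S n => csum f n + f n end.

Lemma cnt_add P : forall N1 M N2, cnt P M (N1+N2) = cnt P M N1 + cnt P (M+N1) N2.
Proof.
  induction N1; intros M N2; simpl. now rewrite Nat.add_0_r.
  rewrite IHN1. replace (S M + N1) with (M + S N1) by lia. lia.
Qed.
Lemma cnt_le P : forall N M, cnt P M N <= N.
Proof. induction N; intros M; simpl; auto. specialize (IHN (S M)). destruct (P M); lia. Qed.
Lemma cnt_mono P Q : (forall i, P i = true -> Q i = true) -> forall N M, cnt P M N <= cnt Q M N.
Proof.
  intros H; induction N; intros M; simpl; auto. specialize (IHN (S M)).
  destruct (P M) eqn:E; [rewrite (H _ E)|destruct (Q M)]; lia.
Qed.
Lemma cnt_ext P Q : forall N M, (forall i, M <= i < M + N -> P i = Q i) -> cnt P M N = cnt Q M N.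
Proof.
  induction N; intros M H; simpl; auto. rewrite (H M) by lia. rewrite IHN; auto.
  intros i Hi; apply H; lia.
Qed.
Lemma cnt_shift P : forall N M k, cnt P (M + k) N = cnt (fun i => P (i + k)) M N.
Proof.
  induction N; intros M k; simpl; auto. rewrite <- IHN. reflexivity.
Qed.
Lemma cnt_shift0 P N M : cnt P M N = cnt (fun i => P (i + M)) 0 N.
Proof. rewrite <- cnt_shift. reflexivity. Qed.
Lemma cnt_sub P M N M' N' : M' <= M -> M + N <= M' + N' -> cnt P M N <= cnt P M' N'.
Proof.
  intros H1 H2.
  replace N' with ((M - M') + (N + (M' + N' - M - N))) by lia.
  rewrite !cnt_add. replace (M' + (M - M')) with M by lia. lia.
Qed.
Lemma cnt_compl P : forall N M, cnt P M N + cnt (fun i => negb (P i)) M N = N.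
Proof. induction N; intros M; simpl; auto. specialize (IHN (S M)). destruct (P M); simpl; lia. Qed.
Lemma cnt_or P Q : forall N M, cnt (fun i => P i || Q i) M N <= cnt P M N + cnt Q M N.
Proof. induction N; intros M; simpl; auto. specialize (IHN (S M)). destruct (P M), (Q M); simpl; lia. Qed.
Lemma cnt_blocks P : forall U V M, cnt P M (U*V) = csum (fun u => cnt P (M + u*V) V) U.
Proof.
  induction U; intros V M; simpl; auto. replace (V + U*V) with (U*V + V) by lia.
  rewrite cnt_add, IHU. reflexivity.
Qed.
Lemma cnt_csum P : forall N M, cnt P M N = csum (fun i => if P (M+i) then 1 else 0) N.
Proof.
  induction N; intros M; cbn [cnt csum]; auto. rewrite IHN.
  assert (forall n, csum (fun i => if P (S M + i) then 1 else 0) n + (if P M then 1 else 0)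
     = csum (fun i => if P (M + i) then 1 else 0) n + (if P (M + n) then 1 else 0)).
  { induction n; cbn [csum]. rewrite Nat.add_0_r; lia.
    replace (S M + n) with (M + S n) by lia. lia. }
  rewrite <- H. lia.
Qed.
Lemma csum_ext f g : forall n, (forall i, i < n -> f i = g i) -> csum f n = csum g n.
Proof. induction n; intros H; simpl; auto. rewrite IHn, H; auto. Qed.
Lemma csum_le f g : forall n, (forall i, i < n -> f i <= g i) -> csum f n <= csum g n.
Proof. induction n; intros H; simpl; auto. assert (csum f n <= csum g n) by (apply IHn; intros; apply H; lia).
  assert (f n <= g n) by (apply H; lia). lia. Qed.
Lemma csum_plus f g : forall n, csum (fun i => f i + g i) n = csum f n + csum g n.
Proof. induction n; simpl; auto. rewrite IHn. lia. Qed.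
Lemma csum_scale f k : forall n, csum (fun i => k * f i) n = k * csum f n.
Proof. induction n; simpl; auto. rewrite IHn. lia. Qed.
Lemma csum_exchange f : forall n m, csum (fun y => csum (fun z => f y z) m) n = csum (fun z => csum (fun y => f y z) n) m.
Proof.
  induction n; intros m; simpl.
  - induction m; simpl; auto. rewrite <- IHm; reflexivity.
  - rewrite IHn. rewrite <- csum_plus. reflexivity.
Qed.
Lemma cnt_blocks_eq P U V M : (forall u, u < U -> cnt P (M + u*V) V = cnt P M V) -> cnt P M (U*V) = U * cnt P M V.
Proof.
  intros H. rewrite cnt_blocks. rewrite (csum_ext _ (fun _ => cnt P M V)) by auto.
  clear H. induction U; simpl; auto. rewrite IHU. lia.
Qed.
Lemma cnt_rot P n Z : 0 < n -> cnt (fun y => P ((y + Z) mod n)) 0 n = cnt P 0 n.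
Proof.
  intros Hn.
  rewrite (cnt_ext _ (fun y => P ((y + Z mod n) mod n))).
  2:{ intros i _. f_equal. rewrite Nat.Div0.add_mod_idemp_r by lia. reflexivity. }
  assert (HZ : Z mod n < n) by (apply Nat.mod_upper_bound; lia).
  set (z := Z mod n) in *. clearbody z.
  assert (E1 : cnt (fun y => P ((y + z) mod n)) 0 n =
     cnt (fun y => P ((y + z) mod n)) 0 (n - z) + cnt (fun y => P ((y + z) mod n)) (n - z) z).
  { rewrite <- cnt_add. f_equal. lia. }
  assert (E2 : cnt P 0 n = cnt P 0 z + cnt P z (n - z)).
  { rewrite <- cnt_add. f_equal. lia. }
  rewrite E1, E2.
  assert (E3 : cnt (fun y => P ((y + z) mod n)) 0 (n - z) = cnt P z (n - z)).
  { rewrite (cnt_shift0 P (n - z) z). apply cnt_ext. intros i Hi. rewrite Nat.mod_small by lia. reflexivity. }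
  assert (E4 : cnt (fun y => P ((y + z) mod n)) (n - z) z = cnt P 0 z).
  { rewrite (cnt_shift0 _ z (n - z)). rewrite (cnt_shift0 P z 0). apply cnt_ext. intros i Hi.
    f_equal. rewrite (Nat.Div0.mod_eq (i + (n - z) + z) n).
    assert ((i + (n - z) + z) / n = 1). { symmetry; apply Nat.div_unique with i; lia. } rewrite H. lia. }
  lia.
Qed.
Fixpoint tf (f n : nat) : bool := match f with 0 => false | S f => xorb (Nat.odd n) (tf f (Nat.div2 n)) end.
Definition t n := tf n n.
Lemma tf_zero f : tf f 0 = false.
Proof. induction f; simpl; auto. Qed.
Lemma tf_stable : forall f1 f2 n, n <= f1 -> n <= f2 -> tf f1 n = tf f2 n.
Proof.
  induction f1; intros f2 n H1 H2.
  - assert (n = 0) by lia; subst. rewrite !tf_zero; auto.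
  - destruct f2.
    + assert (n = 0) by lia; subst. simpl. rewrite tf_zero. reflexivity.
    + simpl. f_equal. apply IHf1.
      * destruct n; [simpl; lia|]. pose proof (Nat.lt_div2 (S n)). lia.
      * destruct n; [simpl; lia|]. pose proof (Nat.lt_div2 (S n)). lia.
Qed.
Lemma tf_S f n : tf (S f) n = xorb (Nat.odd n) (tf f (Nat.div2 n)).
Proof. reflexivity. Qed.
Lemma t_double n : t (2*n) = t n.
Proof.
  unfold t. destruct n. reflexivity.
  replace (2 * S n) with (S (2*n+1)) at 1 by lia. rewrite tf_S.
  rewrite Nat.div2_double. replace (Nat.odd (2 * S n)) with false by (rewrite Nat.odd_mul; reflexivity).
  rewrite Bool.xorb_false_l. apply tf_stable; lia.
Qed.
Lemma t_double1 n : t (2*n+1) = negb (t n).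
Proof.
  unfold t. replace (2*n+1) with (S (2*n)) at 1 by lia. rewrite tf_S.
  replace (Nat.div2 (2*n+1)) with n.
  2:{ replace (2*n+1) with (S (2*n)) by lia. rewrite Nat.div2_succ_double. reflexivity. }
  replace (Nat.odd (2*n+1)) with true by (rewrite Nat.add_comm, Nat.odd_add_mul_2; reflexivity).
  rewrite Bool.xorb_true_l. rewrite (tf_stable (2*n) n n) by lia. reflexivity.
Qed.
Lemma t_split : forall K q r, r < 2^K -> t (2^K*q + r) = xorb (t q) (t r).
Proof.
  induction K; intros q r Hr.
  - simpl in Hr. assert (r = 0) by lia. subst. simpl. rewrite Nat.add_0_r.
    replace (q+0) with q by lia. unfold t at 3. simpl. destruct (t q); reflexivity.
  - destruct (Nat.Even_or_Odd r) as [[r' E]|[r' E]]; subst.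
    + rewrite Nat.pow_succ_r' in *.
      replace (2 * 2^K * q + 2 * r') with (2*(2^K*q + r')) by lia.
      rewrite !t_double. apply IHK. lia.
    + rewrite Nat.pow_succ_r' in *.
      replace (2 * 2^K * q + (2 * r' + 1)) with (2*(2^K*q + r')+1) by lia.
      rewrite !t_double1, IHK by lia. destruct (t q), (t r'); reflexivity.
Qed.

Definition X u := xorb (t u) (t (u+1)).
Lemma X_even u : X (2*u) = true.
Proof. unfold X. rewrite t_double1, t_double. destruct (t u); reflexivity. Qed.
Lemma X_4i1 i : X (4*i+1) = false.
Proof. unfold X. replace (4*i+1) with (2*(2*i)+1) by lia. replace (2*(2*i)+1+1) with (2*(2*i+1)) by lia.
  rewrite t_double1. rewrite (t_double (2*i+1)). rewrite t_double1, t_double. destruct (t i); reflexivity. Qed.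
Lemma cntX4 m : cnt X 0 (m*4) <= 3*m /\ cnt (fun u => negb (X u)) 0 (m*4) <= 3*m.
Proof.
  rewrite !cnt_blocks.
  assert (F : forall i, X (i*4) = true /\ X (S (i*4)) = false /\ X (S (S (i*4))) = true).
  { intros i. split; [|split].
    - replace (i*4) with (2*(2*i)) by lia. apply X_even.
    - replace (S (i*4)) with (4*i+1) by lia. apply X_4i1.
    - replace (S (S (i*4))) with (2*(2*i+1)) by lia. apply X_even. }
  replace (3*m) with (csum (fun _ => 3) m) by (induction m; simpl; lia).
  split; apply csum_le; intros i _; destruct (F i) as [F1 [F2 F3]];
    replace (0 + i*4) with (i*4) by lia; cbn [cnt]; rewrite F1, F2, F3;
    destruct (X (S (S (S (i*4))))); simpl; lia.
Qed.
Lemma csum_if (Y : nat -> bool) a b : forall U,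
  csum (fun u => if Y u then a else b) U = a * cnt Y 0 U + b * cnt (fun u => negb (Y u)) 0 U.
Proof.
  induction U as [|U IHU]. simpl; lia.
  replace (S U) with (U + 1) by lia.
  rewrite (cnt_add Y U 0 1), (cnt_add _ U 0 1). cbn [csum]. replace (U+1) with (S U) by lia. cbn [csum].
  rewrite IHU. simpl. destruct (Y U); simpl; lia.
Qed.

Lemma corr w a : 1 <= w -> 32*w <= 2^a -> 8 * cnt (fun s => Bool.eqb (t s) (t (s+w))) 0 (2^a) <= 7 * 2^a.
Proof.
  intros Hw Ha.
  destruct (Nat.log2_spec w) as [Hp1 Hp2]; [lia|].
  set (p := Nat.log2 w) in *. clearbody p.
  set (V := 2^(S p)) in *.
  assert (HVp : V = 2 * 2^p) by (unfold V; rewrite Nat.pow_succ_r'; reflexivity).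
  assert (Hap : p + 5 <= a).
  { apply (Nat.pow_le_mono_r_iff 2); [lia|]. rewrite Nat.pow_add_r. simpl (2^5). lia. }
  set (m := 2^(a - p - 3)).
  assert (H2a : 2^a = (m*4)*V).
  { unfold m, V. replace 4 with (2^2) by reflexivity. rewrite <- !Nat.pow_add_r. f_equal. lia. }
  set (E := fun s => Bool.eqb (t s) (t (s+w))).
  set (beta := fun v => xorb (t v) (t (v + w - V))).
  set (n1 := cnt beta (V - w) w).
  set (n0 := cnt (fun v => negb (beta v)) (V - w) w).
  assert (Hn : n1 + n0 = w) by (apply cnt_compl).
  assert (Hu : forall u, cnt E (0 + u*V) V <= (V - w) + (if X u then n1 else n0)).
  { intros u. replace (0 + u*V) with (u*V) by lia.
    replace V with ((V - w) + w) at 2 by lia. rewrite cnt_add.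
    pose proof (cnt_le E (V - w) (u*V)).
    assert (cnt E (u*V + (V - w)) w = if X u then n1 else n0).
    { transitivity (cnt (fun v => Bool.eqb (X u) (beta v)) (V - w) w).
      - rewrite (cnt_shift0 E), (cnt_shift0 (fun v => Bool.eqb (X u) (beta v))).
        apply cnt_ext. intros i Hi. unfold E, beta, X.
        assert (Hv : i + (V - w) < 2^(S p)) by (fold V; lia).
        replace (i + (u*V + (V - w))) with (2^(S p) * u + (i + (V - w))) by (fold V; lia).
        replace (2^(S p) * u + (i + (V - w)) + w) with (2^(S p) * (u+1) + (i + (V - w) + w - V))
          by (fold V; lia).
        rewrite !t_split by (fold V; lia).
        destruct (t u), (t (u+1)), (t (i + (V - w))), (t (i + (V - w) + w - V)); reflexivity.
      - unfold n1, n0. destruct (X u); apply cnt_ext; intros i _; destruct (beta i); reflexivity. }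
    lia. }
  rewrite H2a, cnt_blocks.
  eapply Nat.le_trans. apply Nat.mul_le_mono_l. apply csum_le. intros u _. apply Hu.
  rewrite csum_plus, csum_if.
  replace (csum (fun _ => V - w) (m*4)) with ((m*4)*(V - w)) by (clear; induction (m*4); simpl; lia).
  destruct (cntX4 m) as [HX1 HX2].
  assert (n1 * cnt X 0 (m*4) <= n1 * (3*m)) by (apply Nat.mul_le_mono_l; auto).
  assert (n0 * cnt (fun u => negb (X u)) 0 (m*4) <= n0 * (3*m)) by (apply Nat.mul_le_mono_l; auto).
  assert (m * w >= m * 2^p) by (apply Nat.mul_le_mono_l; auto).
  nia.
Qed.

Definition inE a w s := (2^a <=? s + w) || Bool.eqb (t s) (t (s + w)).

Lemma inE_bound a w : 1 <= w -> 32*w <= 2^a -> 32 * cnt (inE a w) 0 (2^a) <= 31 * 2^a.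
Proof.
  intros H1 H2. pose proof (corr w a H1 H2) as Hc.
  pose proof (cnt_or (fun s => 2^a <=? s + w) (fun s => Bool.eqb (t s) (t (s+w))) (2^a) 0) as Ho.
  assert (cnt (fun s => 2^a <=? s + w) 0 (2^a) <= w).
  { assert (E0 : cnt (fun s => 2^a <=? s + w) 0 (2^a) = cnt (fun s => 2^a <=? s + w) 0 ((2^a - w) + w)) by (f_equal; lia).
    rewrite E0, cnt_add.
    rewrite (cnt_ext _ (fun _ => false) (2^a - w)).
    - assert (forall N M, cnt (fun _ => false) M N = 0) by (induction N; simpl; auto).
      rewrite H. pose proof (cnt_le (fun s => 2^a <=? s + w) w (0 + (2^a - w))). lia.
    - intros i Hi. apply Nat.leb_gt. lia. }
  unfold inE. lia.
Qed.

Lemma pow2_nz k : 2^k <> 0.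
Proof. apply Nat.pow_nonzero; lia. Qed.

Lemma mod_pow_add x T a : (x mod 2^(T+a)) mod 2^T = x mod 2^T.
Proof.
  rewrite (Nat.div_mod_eq x (2^(T+a))) at 2. rewrite Nat.pow_add_r.
  replace (2^T * 2^a * (x / (2^T*2^a))) with ((2^a * (x/(2^T*2^a))) * 2^T) by lia.
  rewrite Nat.add_comm, Nat.Div0.mod_add. reflexivity.
Qed.

Lemma key_mod x c T a : ((x + c)/2^T) mod 2^a = (((x mod 2^(T+a)) + c)/2^T) mod 2^a.
Proof.
  rewrite (Nat.div_mod_eq x (2^(T+a))) at 1. rewrite Nat.pow_add_r.
  set (h := x / (2^T * 2^a)). set (x' := x mod (2^T * 2^a)).
  replace (2^T * 2^a * h + x' + c) with ((x' + c) + (2^a * h) * 2^T) by lia.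
  rewrite Nat.div_add by apply pow2_nz.
  replace (2^a * h) with (h * 2^a) by lia. rewrite Nat.Div0.mod_add. reflexivity.
Qed.

Lemma stage_good (b c w T a : nat) : t (b + c) = false -> t (b + (c + 2^T * w)) = false ->
  inE a w (((b + c)/2^T) mod 2^a) = true.
Proof.
  intros H1 H2.
  set (n := b + c) in *.
  assert (Hn : n = 2^T * (n / 2^T) + n mod 2^T) by apply Nat.div_mod_eq.
  set (q := n / 2^T) in *. set (r := n mod 2^T) in *.
  assert (Hr : r < 2^T) by (apply Nat.mod_upper_bound, pow2_nz).
  assert (Htq : t q = t (q + w)).
  { rewrite Hn, t_split in H1 by auto.
    replace (b + (c + 2^T * w)) with (2^T * (q + w) + r) in H2 by (unfold n in Hn; lia).
    rewrite t_split in H2 by auto. destruct (t q), (t (q+w)), (t r); simpl in *; congruence. }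
  unfold inE. apply Bool.orb_true_iff.
  destruct (Nat.le_gt_cases (2^a) (q mod 2^a + w)) as [Hle|Hgt].
  - left. apply Nat.leb_le. auto.
  - right. apply Bool.eqb_true_iff.
    assert (Hq : q = 2^a * (q / 2^a) + q mod 2^a) by apply Nat.div_mod_eq.
    assert (Hs : q mod 2^a < 2^a) by (apply Nat.mod_upper_bound, pow2_nz).
    rewrite Hq in Htq. rewrite t_split in Htq by auto.
    replace (2^a * (q / 2^a) + q mod 2^a + w) with (2^a * (q / 2^a) + (q mod 2^a + w)) in Htq by lia.
    rewrite t_split in Htq by auto.
    destruct (t (q / 2^a)), (t (q mod 2^a)), (t (q mod 2^a + w)); simpl in *; congruence.
Qed.

Lemma nodup_map_collision (f : nat -> nat) : forall l, NoDup l -> ~ NoDup (map f l) ->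
  exists x y, In x l /\ In y l /\ x <> y /\ f x = f y.
Proof.
  induction l as [|a l IH]; intros Hl Hm.
  - simpl in Hm. exfalso; apply Hm; constructor.
  - inversion Hl; subst. simpl in Hm.
    destruct (in_dec Nat.eq_dec (f a) (map f l)) as [Hin|Hin].
    + apply in_map_iff in Hin. destruct Hin as [y [Hy1 Hy2]].
      exists a, y. repeat split; simpl; auto. intro; subst; contradiction.
    + destruct IH as [x [y [? [? [? ?]]]]]; auto.
      * intro HN. apply Hm. constructor; auto.
      * exists x, y. simpl. auto.
Qed.

Lemma inf_list (C : nat -> bool) (HC : infinite_set C) : forall k, exists l, length l = k /\ NoDup l /\ (forall x, In x l -> C x = true).
Proof.
  induction k as [|k IH].
  - exists []. repeat split; auto. constructor.
  - destruct IH as [l [H1 [H2 H3]]]. destruct (HC (S (list_max l))) as [m [Hm1 Hm2]].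
    exists (m :: l). repeat split.
    + simpl; lia.
    + constructor; auto. intro Hin.
      assert (Forall (fun x => x <= list_max l) l) by (apply list_max_le; lia).
      rewrite Forall_forall in H. specialize (H m Hin). lia.
    + intros x [<-|Hx]; auto.
Qed.

Lemma pigeon (C : nat -> bool) (HC : infinite_set C) K :
  exists c c', c < c' /\ C c = true /\ C c' = true /\ c mod 2^K = c' mod 2^K.
Proof.
  destruct (inf_list C HC (S (2^K))) as [l [H1 [H2 H3]]].
  assert (HN : ~ NoDup (map (fun x => x mod 2^K) l)).
  { intro HN. apply NoDup_incl_length with (l' := seq 0 (2^K)) in HN.
    - rewrite length_map, length_seq in HN. lia.
    - intros y Hy. apply in_map_iff in Hy. destruct Hy as [x [<- _]]. apply in_seq.
      pose proof (Nat.mod_upper_bound x (2^K)). assert (2^K <> 0) by (apply Nat.pow_nonzero; lia). lia. }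
  destruct (nodup_map_collision _ l H2 HN) as [x [y [Hx [Hy [Hxy Hf]]]]].
  destruct (Nat.lt_total x y) as [Hlt|[Heq|Hgt]].
  - exists x, y. auto.
  - contradiction.
  - exists y, x. auto.
Qed.

Lemma stages (C : nat -> bool) (HC : infinite_set C) : forall J, exists T (Phi : nat -> bool),
  (forall x, Phi x = Phi (x mod 2^T)) /\
  (forall b, (forall c, C c = true -> t (b + c) = false) -> Phi b = true) /\
  32^J * cnt Phi 0 (2^T) <= 31^J * 2^T.
Proof.
  induction J as [|J IH].
  - exists 0, (fun _ => true). repeat split; auto.
  - destruct IH as [T [Phi [Hinv [Hgood Hcnt]]]].
    destruct (pigeon C HC T) as [c [c' [Hcc [HC1 [HC2 Hmod]]]]].
    set (w := c' / 2^T - c / 2^T).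
    assert (Hc' : c' = c + 2^T * w).
    { pose proof (Nat.div_mod_eq c (2^T)). pose proof (Nat.div_mod_eq c' (2^T)).
      assert (c / 2^T <= c' / 2^T) by (apply Nat.Div0.div_le_mono; lia).
      unfold w. rewrite Nat.mul_sub_distr_l. lia. }
    assert (Hw : 1 <= w).
    { destruct w; [|lia]. rewrite Nat.mul_0_r in Hc'. lia. }
    set (a := w + 5).
    assert (Ha : 32 * w <= 2^a).
    { unfold a. rewrite Nat.pow_add_r. pose proof (Nat.pow_gt_lin_r 2 w). simpl (2^5). lia. }
    exists (T + a), (fun x => Phi x && inE a w (((x + c)/2^T) mod 2^a)).
    split; [|split].
    + intros x. rewrite <- key_mod. f_equal.
      rewrite Hinv. rewrite (Hinv (x mod 2^(T+a))). rewrite mod_pow_add. reflexivity.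
    + intros b Hb. rewrite Hgood by auto. simpl. apply stage_good with (T := T).
      * apply Hb; auto.
      * rewrite <- Hc'. apply Hb; auto.
    + set (E := cnt (inE a w) 0 (2^a)).
      assert (HE : 32 * E <= 31 * 2^a) by (apply inE_bound; auto).
      assert (Hsplit : cnt (fun x => Phi x && inE a w (((x + c)/2^T) mod 2^a)) 0 (2^(T+a))
                = E * cnt Phi 0 (2^T)).
      { replace (2^(T+a)) with (2^a * 2^T) by (rewrite Nat.pow_add_r; lia).
        rewrite cnt_blocks.
        rewrite (csum_ext _ (fun y => csum (fun z => if Phi z then (if inE a w ((y + (z + c)/2^T) mod 2^a) then 1 else 0) else 0) (2^T))).
        2:{ intros y Hy. rewrite cnt_csum. apply csum_ext. intros z Hz.
            replace (0 + y * 2^T + z) with (z + y * 2^T) by lia.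
            rewrite Hinv. rewrite Nat.Div0.mod_add. rewrite (Nat.mod_small z) by auto.
            replace (z + y * 2^T + c) with ((z + c) + y * 2^T) by lia.
            rewrite Nat.div_add by apply pow2_nz.
            destruct (Phi z); simpl; auto. rewrite Nat.add_comm. reflexivity. }
        rewrite csum_exchange.
        rewrite (csum_ext _ (fun z => if Phi z then E else 0)).
        2:{ intros z Hz. destruct (Phi z).
            - unfold E. rewrite <- (cnt_rot (inE a w) (2^a) ((z + c)/2^T)) by (pose proof (pow2_nz a); lia).
              rewrite cnt_csum. apply csum_ext. intros y _. reflexivity.
            - clear. induction (2^a) as [|k IHk]; simpl; lia. }
        rewrite csum_if. lia. }
      rewrite Hsplit. rewrite Nat.pow_add_r. simpl (32 ^ S J). simpl (31 ^ S J).
      assert (E * (32^J * cnt Phi 0 (2^T)) <= E * (31^J * 2^T)) by (apply Nat.mul_le_mono_l; auto).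
      assert ((32 * E) * (31^J * 2^T) <= (31 * 2^a) * (31^J * 2^T)) by (apply Nat.mul_le_mono_r; auto).
      nia.
Qed.

From Stdlib Require Import Reals Lra.
Open Scope R_scope.

Definition Aset (n : nat) : bool := negb (t n).

Lemma cntA_pair : forall k m, cnt Aset (2*m) (2*k) = k.
Proof.
  induction k as [|k IH]; intros m. reflexivity.
  replace (2 * S k)%nat with (2 + 2*k)%nat by lia. rewrite cnt_add.
  replace (2*m + 2)%nat with (2 * S m)%nat by lia. rewrite IH.
  cbn [cnt]. replace (S (2*m)) with (2*m+1)%nat by lia. unfold Aset. rewrite t_double1.
  rewrite t_double. destruct (t m); simpl; lia.
Qed.

Lemma cntA_bounds M N : (2 * cnt Aset M N <= N + 2 /\ N <= 2 * cnt Aset M N + 2)%nat.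
Proof.
  split.
  - pose proof (Nat.div_mod_eq M 2). pose proof (Nat.mod_upper_bound M 2).
    pose proof (Nat.div_mod_eq (N+2) 2). pose proof (Nat.mod_upper_bound (N+2) 2).
    assert (cnt Aset M N <= cnt Aset (2*(M/2)) (2*((N+2)/2)))%nat by (apply cnt_sub; lia).
    rewrite cntA_pair in H3. lia.
  - destruct N as [|N]. lia.
    pose proof (Nat.div_mod_eq (M+1) 2). pose proof (Nat.mod_upper_bound (M+1) 2).
    pose proof (Nat.div_mod_eq N 2). pose proof (Nat.mod_upper_bound N 2).
    assert (cnt Aset (2*((M+1)/2)) (2*(N/2)) <= cnt Aset M (S N))%nat by (apply cnt_sub; lia).
    rewrite cntA_pair in H3. lia.
Qed.

Lemma wd_le1 A N M : window_density A N M <= 1.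
Proof.
  unfold window_density. destruct N as [|N].
  - simpl. unfold Rdiv. rewrite Rmult_0_l. lra.
  - pose proof (cnt_le A (S N) M). apply le_INR in H.
    assert (0 < INR (S N)) by (apply lt_0_INR; lia).
    unfold Rdiv. apply Rmult_le_reg_r with (INR (S N)); auto.
    rewrite Rmult_assoc, Rinv_l by lra. lra.
Qed.

Lemma wd_ge0 A N M : 0 <= window_density A N M.
Proof.
  unfold window_density. destruct N as [|N].
  - simpl. unfold Rdiv. rewrite Rmult_0_l. lra.
  - unfold Rdiv. apply Rmult_le_pos; [apply pos_INR| left; apply Rinv_0_lt_compat, lt_0_INR; lia].
Qed.

Lemma wdA_bounds N M : (1 <= N)%nat -> Rabs (window_density Aset N M - 1/2) <= 1 / INR N.
Proof.
  intros HN. destruct (cntA_bounds M N) as [H1 H2].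
  apply le_INR in H1, H2. rewrite !mult_INR, !plus_INR in H1. rewrite !plus_INR in H2. rewrite !mult_INR in H2. simpl (INR 2) in *.
  assert (Hn : 0 < INR N) by (apply lt_0_INR; lia).
  unfold window_density. set (c := INR (cnt Aset M N)) in *. set (n := INR N) in *.
  assert (Hi : n * / n = 1) by (apply Rinv_r; lra).
  assert (0 < / n) by (apply Rinv_0_lt_compat; lra).
  unfold Rdiv. set (i := / n) in *. rewrite Rmult_1_l. apply Rabs_le.
  assert (c * i = c * i) by reflexivity.
  split; nra.
Qed.

Lemma Rabs_le_inv' x b : Rabs x <= b -> - b <= x <= b.
Proof. unfold Rabs. destruct (Rcase_abs x); lra. Qed.

Definition EA (N : nat) (x : R) : Prop := exists M : nat, x = window_density Aset N M.

Lemma EA_bound N : bound (EA N).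
Proof. exists 1. intros x [M ->]. apply wd_le1. Qed.
Lemma EA_ne N : exists x, EA N x.
Proof. exists (window_density Aset N 0). exists 0%nat. reflexivity. Qed.

Definition sA (N : nat) : R := proj1_sig (completeness (EA N) (EA_bound N) (EA_ne N)).

Lemma sA_lub N : is_lub (EA N) (sA N).
Proof. unfold sA. destruct (completeness _ _ _) as [m Hm]. exact Hm. Qed.

Lemma posA : pos_ubd Aset.
Proof.
  exists (1/2). split; [|lra]. exists sA. split. apply sA_lub.
  intros eps Heps. destruct (INR_archimed eps 2 Heps) as [N0 HN0].
  exists N0. intros n Hn. unfold Rdist.
  assert (HN0p : (1 <= N0)%nat). { destruct N0. simpl in HN0. lra. lia. }
  assert (Hnp : 0 < INR n) by (apply lt_0_INR; lia).
  assert (Hle : INR N0 <= INR n) by (apply le_INR; lia).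
  assert (Hinv : 1 / INR n < eps).
  { unfold Rdiv. rewrite Rmult_1_l. apply Rmult_lt_reg_r with (INR n); auto.
    rewrite Rinv_l by lra. nra. }
  destruct (sA_lub n) as [Hub Hleast].
  assert (U : sA n <= 1/2 + 1/INR n).
  { apply Hleast. intros x [M ->]. pose proof (wdA_bounds n M ltac:(lia)). apply Rabs_le_inv' in H. lra. }
  assert (L : 1/2 - 1/INR n <= sA n).
  { pose proof (wdA_bounds n 0 ltac:(lia)). apply Rabs_le_inv' in H.
    assert (window_density Aset n 0 <= sA n) by (apply Hub; exists 0%nat; reflexivity). lra. }
  unfold Rabs; destruct (Rcase_abs _); lra.
Qed.

Lemma block_inv (Phi : nat -> bool) T : (forall x, Phi x = Phi (x mod 2^T)) ->
  forall k, cnt Phi (k * 2^T) (2^T) = cnt Phi 0 (2^T).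
Proof.
  intros Hinv k. rewrite cnt_shift0. apply cnt_ext. intros i Hi.
  rewrite Hinv. rewrite Nat.Div0.mod_add. rewrite Nat.mod_small by lia. reflexivity.
Qed.

Lemma real_step (c q T J : nat) : (1 <= q)%nat ->
  (32^J * c <= (q+1) * 31^J * 2^T)%nat ->
  INR c / INR (q * 2^T) <= 2 * (31/32)^J.
Proof.
  intros Hq H. apply le_INR in H. rewrite !mult_INR, !pow_INR, plus_INR in H.
  rewrite mult_INR, pow_INR.
  replace (INR 32) with 32 in H by (simpl; lra). replace (INR 31) with 31 in H by (simpl; lra).
  replace (INR 2) with 2 in * by (simpl; lra). simpl (INR 1) in H.
  assert (HQ : 1 <= INR q) by (apply (le_INR 1); lia).
  assert (HW : 0 < 2^T) by (apply pow_lt; lra).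
  assert (HP : 0 < 32^J) by (apply pow_lt; lra).
  assert (HP31 : 0 < 31^J) by (apply pow_lt; lra).
  replace ((31/32)^J) with (31^J * / 32^J) by (unfold Rdiv; rewrite Rpow_mult_distr, pow_inv; reflexivity).
  set (C := INR c) in *. set (Q := INR q) in *. set (W := 2^T) in *. set (P := 32^J) in *. set (P1 := 31^J) in *.
  assert (H1 : C <= (Q + 1) * W * (P1 * / P)).
  { apply Rmult_le_reg_l with P; auto.
    replace (P * ((Q + 1) * W * (P1 * / P))) with ((Q+1) * P1 * W) by (field; lra). lra. }
  assert (Hr : 0 <= P1 * / P) by (apply Rmult_le_pos; [lra| left; apply Rinv_0_lt_compat; lra]).
  assert (H2 : (Q + 1) * W * (P1 * / P) <= 2 * Q * W * (P1 * / P)).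
  { apply Rmult_le_compat_r; auto. nra. }
  unfold Rdiv. apply Rmult_le_reg_r with (Q * W). nra.
  rewrite Rmult_assoc, Rinv_l by nra. nra.
Qed.

Theorem proposition1 :
  exists A : nat -> bool,
    pos_ubd A /\
    ~ (exists B C : nat -> bool, pos_ubd B /\ infinite_set C /\ sumset_sub B C A).
Proof.
  exists Aset. split. apply posA.
  intros [B [C [[d [[s [Hlub Hcv]] Hd]] [HC Hsum]]]].
  destruct (pow_lt_1_zero (31/32) ltac:(rewrite Rabs_pos_eq; lra) (d/4) ltac:(lra)) as [J HJ].
  specialize (HJ J (le_n J)).
  assert (Hr0 : 0 <= (31/32)^J) by (apply pow_le; lra).
  rewrite Rabs_pos_eq in HJ by auto.
  destruct (stages C HC J) as [T [Phi [Hinv [Hgood Hcnt]]]].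
  destruct (Hcv (d/2) ltac:(lra)) as [N0 HN0].
  set (q := S N0). set (N := (q * 2^T)%nat).
  assert (HT : (1 <= 2^T)%nat) by (pose proof (pow2_nz T); lia).
  assert (HNN : (N >= N0)%nat) by (unfold N, q; nia).
  specialize (HN0 N HNN). unfold Rdist in HN0.
  assert (HsN : s N <= 2 * (31/32)^J).
  { destruct (Hlub N) as [_ Hleast]. apply Hleast. intros x [M ->].
    unfold window_density. unfold N. apply real_step. unfold q; lia.
    assert (H1 : (cnt B M N <= cnt Phi M N)%nat).
    { apply cnt_mono. intros i Hi. apply Hgood. intros c Hc.
      pose proof (Hsum i c Hi Hc) as Ha. unfold Aset in Ha. destruct (t (i + c)); simpl in *; congruence. }
    assert (H2 : (cnt Phi M N <= cnt Phi (M / 2^T * 2^T) ((q+1) * 2^T))%nat).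
    { pose proof (Nat.div_mod_eq M (2^T)). pose proof (Nat.mod_upper_bound M (2^T) (pow2_nz T)).
      apply cnt_sub; unfold N; nia. }
    assert (H3 : cnt Phi (M / 2^T * 2^T) ((q+1) * 2^T) = ((q+1) * cnt Phi 0 (2^T))%nat).
    { rewrite cnt_blocks_eq.
      - rewrite block_inv; auto.
      - intros u _. replace (M / 2^T * 2^T + u * 2^T)%nat with ((M/2^T + u) * 2^T)%nat by lia.
        rewrite !block_inv; auto. }
    fold N in H1. rewrite H3 in H2.
    assert (H4 : (32^J * ((q+1) * cnt Phi 0 (2^T)) <= (q+1) * 31^J * 2^T)%nat).
    { replace (32^J * ((q+1) * cnt Phi 0 (2^T)))%nat with ((q+1) * (32^J * cnt Phi 0 (2^T)))%nat by lia.
      rewrite <- Nat.mul_assoc. apply Nat.mul_le_mono_l. auto. }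
    fold N. nia. }
  unfold Rabs in HN0. destruct (Rcase_abs _); lra.
Qed.
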